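(* Let $\mathcal{M}$ be a CTMC with states $s_1,\dots,s_n$ ($n=|S|$), $s_1$ the initial state, $E(s)=1$ for all states, and $s_n=g$ a unique absorbing goal state; let $\delta>0$, $c=e^{\delta}$, $\mathcal{M}'=c\cdot\mathcal{M}$, $t\geq0$. Suppose the transition probability matrix is diagonalizable, $\mathbf{P}=\mathbf{S}\mathbf{D}\mathbf{S}^{-1}$, as below. Then $$\left|\mathrm{Pr}^{\mathcal{M}'}(\lozenge^{\leq t}g)-\mathrm{Pr}^{\mathcal{M}}(\lozenge^{\leq t}g)\right|\leq(n-a_{\mathbf{P}})\cdot C\cdot\sum_{k=1}^{\infty}|\lambda|^{k-1}\cdot\mathrm{Diff}_t(\mathcal{E}_k),$$ where $C=\max_{i=a_{\mathbf{P}}+1,\dots,n}\left|\mathbf{S}_{1,i}\cdot\mathbf{S}^{-1}_{i,n}\cdot(\lambda_i-1)\right|$.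
   Context: In a CTMC the process stays in $s$ an exponential time with rate $E(s)$, then jumps to $s'$ with probability $P(s,s')$; $c\cdot\mathcal{M}$ multiplies all exit rates by $c$; $\mathrm{Pr}^{\mathcal{M}}(\lozenge^{\leq t}g)$ is the probability of reaching $g$ from the initial state within time $t$. Standing assumption: states from which $g$ is unreachable are collapsed into a single absorbing fail state, so $\mathcal{M}$ has at most two absorbing states, one of which is reached almost surely. $\mathbf{P}_{i,j}=P(s_i,s_j)$; $a_{\mathbf{P}}\in\{1,2\}$ is the multiplicity of eigenvalue $1$ of $\mathbf{P}$. $\mathbf{D}$ is diagonal with diagonal entries $\lambda_1,\dots,\lambda_n$, the eigenvalues of $\mathbf{P}$ repeated according to multiplicity, in descending order of modulus, so $\lambda_1=\dots=\lambda_{a_{\mathbf{P}}}=1$; $\mathbf{S}$ is invertible. $\lambda$ denotes the eigenvalue of second largest modulus, $\lambda=\lambda_{a_{\mathbf{P}}+1}$. The Erlang CTMC $\mathcal{E}_k$ has states $s_0,\dots,s_{k-1},g$, initial state $s_0$, all exit rates $1$, a deterministic chain $s_0\to s_1\to\dots\to s_{k-1}\to g$ with $g$ absorbing and labeled differently from the equally labeled others; $\mathrm{Diff}_t(\mathcal{E}_k)=|\mathrm{Pr}^{\mathcal{E}_k}(\lozenge^{\leq t}g)-\mathrm{Pr}^{c\cdot\mathcal{E}_k}(\lozenge^{\leq t}g)|$. *)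

(* Defs.v *)
From HB Require Import structures.
From mathcomp Require Import all_boot all_order all_algebra.
From mathcomp Require Import all_classical all_reals all_analysis.
From mathcomp Require Import complex.
Set Implicit Arguments. Unset Strict Implicit. Unset Printing Implicit Defensive.
Import Order.TTheory GRing.Theory Num.Theory.
Local Open Scope ring_scope.

(* A (labelled-by-goal) CTMC with states 'I_n.+1 (i.e. n.+1 states),
   exit rates [rate] and embedded jump matrix [jump]. The initial state is
   ord0; the goal state is passed explicitly. *)
Record ctmc (R : realType) (n : nat) := Ctmc {
  rate : 'I_n.+1 -> R ;
  jump : 'M[R]_n.+1 }.

Definition scale_ctmc (R : realType) n (c : R) (M : ctmc R n) : ctmc R n :=
  Ctmc (fun s => c * rate M s) (jump M).

Definition unif_rate (R : realType) n (M : ctmc R n) : R :=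
  \big[Num.max/0]_(s < n.+1) rate M s.

Definition unif_mx (R : realType) n (M : ctmc R n) (g : 'I_n.+1) : 'M[R]_n.+1 :=
  \matrix_(i, j)
    if i == g then (j == g)%:R
    else rate M i / unif_rate M * jump M i j
         + (i == j)%:R * (1 - rate M i / unif_rate M).

Definition poisson (R : realType) (x : R) (k : nat) : R :=
  expR (- x) * x ^+ k / (k`!)%:R.

(* Pr^M(<>^{<= t} g) from the initial state ord0, by uniformisation:
   probability of being in g at time t when g is made absorbing. *)
Definition reach_prob (R : realType) n (M : ctmc R n) (g : 'I_n.+1) (t : R) : R :=
  limn (fun N => \sum_(k < N)
     poisson (unif_rate M * t) k * (unif_mx M g ^+ k) ord0 g).

(* Erlang CTMC E_k: states s_0..s_{k-1}, g (= index k), all rates 1,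
   s_i -> s_{i+1}, s_{k-1} -> g, g absorbing. *)
Definition erlang (R : realType) (k : nat) : ctmc R k :=
  Ctmc (fun _ => 1)
       (\matrix_(i, j) if (i : nat) == k then (j == ord_max)%:R
                       else ((j : nat) == i.+1)%:R).

Definition Diff (R : realType) (c t : R) (k : nat) : R :=
  `| reach_prob (erlang R k) ord_max t
     - reach_prob (scale_ctmc c (erlang R k)) ord_max t |.

Definition cmod (R : realType) (z : R[i]) : R :=
  Num.sqrt (complex.Re z ^+ 2 + complex.Im z ^+ 2).

Definition to_C (R : realType) (x : R) : R[i] := Complex x 0.

(* Main.v *)
Set Warnings "-notation-overridden,-ambiguous-paths,-notation-incompatible-prefix".
Require Import Defs.
From HB Require Import structures.
From mathcomp Require Import all_boot all_order all_algebra.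
From mathcomp Require Import all_classical all_reals all_analysis.
From mathcomp Require Import complex.
From mathcomp Require Import ring.
Import Order.TTheory GRing.Theory Num.Theory.
Import numFieldNormedType.Exports.
Set Implicit Arguments. Unset Strict Implicit. Unset Printing Implicit Defensive.
Local Open Scope ring_scope.

Section P1.
Variable R : realType.
Implicit Types x : R.

Lemma poisson_ge0 x k : 0 <= x -> 0 <= poisson x k.
Proof. by move=> x0; rewrite /poisson divr_ge0 ?mulr_ge0 ?expR_ge0 ?exprn_ge0. Qed.

Lemma series_poissonE x :
  series (poisson x) = (fun N => expR (- x) * series (exp_coeff x) N).
Proof.
apply/funext => N; rewrite /series /= mulr_sumr; apply: eq_bigr => k _.
by rewrite /poisson /exp_coeff /= mulrA.
Qed.

Lemma poisson_cvg x : cvgn (series (poisson x)) /\ limn (series (poisson x)) = 1.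
Proof.
rewrite series_poissonE.
have h := is_cvg_series_exp_coeff x.
have hc : cvgn (fun N : nat => expR (- x) * series (exp_coeff x) N).
  by apply: is_cvgM => //; exact: is_cvg_cst.
split => //.
rewrite (@limM _ _ _ _ (fun=> expR (- x)) (series (exp_coeff x))) //; last exact: is_cvg_cst.
rewrite lim_cst. have -> : limn (series (exp_coeff x)) = expR x by []. by rewrite -expRD addNr expR0. exact: Rhausdorff.
Qed.

Lemma G1 (u : nat -> R) : cvgn (series u) ->
  (\sum_(k <oo) (u k)%:E)%E = (limn (series u))%:E.
Proof.
move=> cu; rewrite -EFin_lim //; apply: congr_lim; apply/funext => N.
by rewrite /series /= sumEFin.
Qed.

Lemma poisson_esum x : 0 <= x -> (\sum_(k <oo) (poisson x k)%:E)%E = 1%:E.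
Proof. by move=> _; have [c l] := poisson_cvg x; rewrite G1 // l. Qed.

Lemma fin2ser (f : nat -> \bar R) k : (forall j, 0 <= f j)%E ->
  (\sum_(j < k) f j)%E = (\sum_(j <oo) (if (j < k)%N then f j else 0))%E.
Proof.
move=> f0; rewrite (@nneseries_split _ _ 0 k); last by move=> j _; case: ifP.
rewrite eseries0 ?adde0; last by move=> i; rewrite add0n leqNgt => /negbTE ->.
rewrite big_mkord add0n; apply: eq_bigr => i _; by rewrite ltn_ord.
Qed.

Definition er x (j : nat) := limn (series (fun k => poisson x k * ((j < k)%N)%:R)).

Lemma bounded_cvg x (v : nat -> R) : 0 <= x -> (forall k, 0 <= v k <= 1) ->
  cvgn (series (fun k => poisson x k * v k)) /\
  (limn (series (fun k => poisson x k * v k)) <= 1).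
Proof.
move=> x0 v01.
have le : (\sum_(k <oo) (poisson x k * v k)%:E <= 1%:E)%E.
  rewrite -(poisson_esum x0); apply: lee_nneseries.
    by move=> k _ _; rewrite lee_fin mulr_ge0 ?poisson_ge0 //; case/andP: (v01 k).
  move=> k _; rewrite lee_fin ler_piMr ?poisson_ge0 //; by case/andP: (v01 k).
have c : cvgn (series (fun k => poisson x k * v k)).
  apply: nnseries_is_cvg.
    by move=> k; rewrite mulr_ge0 ?poisson_ge0 //; case/andP: (v01 k).
  by apply: le_lt_trans le _; exact: ltry.
split => //; by move: le; rewrite G1 // lee_fin.
Qed.


Lemma key x (A d : nat -> R) : 0 <= x -> (forall k, 0 <= A k <= 1) ->
  (forall j, 0 <= d j) -> (forall k, A k = A 0%N + \sum_(j < k) d j) ->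
  cvgn (series (fun j => d j * er x j)) /\
  limn (series (fun k => poisson x k * A k)) =
    A 0%N + limn (series (fun j => d j * er x j)).
Proof.
move=> x0 A01 d0 AE.
have p0 k := poisson_ge0 k x0.
have A0 : 0 <= A 0%N by case/andP: (A01 0%N).
have [cA _] := bounded_cvg x0 A01.
have ind01 (j k : nat) : (0 <= ((j < k)%N)%:R :> R) && (((j < k)%N)%:R <= 1 :> R).
  by case: (j < k)%N; rewrite ?lexx ?ler01.
have cer j := (bounded_cvg x0 (ind01 j)).1.
have er0 j : 0 <= er x j.
  rewrite /er -lee_fin -G1 //; apply: nneseries_ge0 => k _ _.
  by rewrite lee_fin mulr_ge0.
have h1 : (\sum_(k <oo) (poisson x k * A k)%:E =
   (A 0%N)%:E * \sum_(k <oo) (poisson x k)%:E +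
   \sum_(j <oo) (d j * er x j)%:E)%E.
  transitivity (\sum_(k <oo) ((A 0%N * poisson x k)%:E +
      \sum_(j <oo) (if (j < k)%N then (poisson x k * d j)%:E else 0)))%E.
    apply: eq_eseriesr => k _.
    rewrite -fin2ser; last by move=> j; rewrite lee_fin mulr_ge0.
    by rewrite sumEFin -EFinD AE mulrDr -mulr_sumr mulrC.
  rewrite nneseriesD; last 2 first.
  - by move=> k _ _; rewrite lee_fin mulr_ge0.
  - move=> k _ _; apply: nneseries_ge0 => j _ _; case: ifP => // _.
    by rewrite lee_fin mulr_ge0.
  congr (_ + _)%E.
    under eq_eseriesr do rewrite EFinM.
    by rewrite nneseriesZl // => k _; rewrite lee_fin.
  rewrite nneseries_interchange; last first.
    by move=> k j; case: ifP => // _; rewrite lee_fin mulr_ge0.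
  apply: eq_eseriesr => j _.
  rewrite EFinM /er -G1 // -nneseriesZl; last first.
    by move=> k _; rewrite lee_fin mulr_ge0 ?p0 ?(andP (ind01 j k)).1.
  apply: eq_eseriesr => k _; case: ifP => _; rewrite -EFinM.
    by rewrite mulr1 mulrC.
  by rewrite mulr0 mulr0.
rewrite poisson_esum // mule1 G1 // in h1.
have cu : cvgn (series (fun j => d j * er x j)).
  apply: nnseries_is_cvg; first by move=> j; rewrite mulr_ge0.
  have [_ le1] := bounded_cvg x0 A01.
  have : (\sum_(j <oo) (d j * er x j)%:E <= (limn (series (fun k => poisson x k * A k)))%:E)%E.
    rewrite h1 leeDr // lee_fin //.
  move/le_lt_trans; apply; exact: ltry.
split => //.
by move: h1; rewrite G1 // -EFinD => -[].
Qed.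

End P1.

Section P2.
Variable R : realType.

Lemma absbound (w : nat -> R) : cvgn (series w) ->
  ((`|limn (series w)|)%:E <= \sum_(j <oo) (`|w j|)%:E)%E.
Proof.
move=> cw.
have [->|Bfin] := eqVneq (\sum_(j <oo) (`|w j|)%:E)%E +oo%E; first exact: leey.
have cn : cvgn (series (fun j => `|w j|)).
  by apply: nnseries_is_cvg => //; rewrite ltey.
rewrite G1 // lee_fin -lim_norm //.
apply: ler_lim => //; first exact: is_cvg_norm.
by apply: nearW => N; rewrite /series /=; apply: ler_norm_sum.
Qed.

Lemma bigmax_const (m : nat) (r : R) : 0 <= r -> \big[Num.max/0]_(s < m.+1) r = r.
Proof.
move=> r0; rewrite big_const_ord; elim: m => [|m IH] /=; first by rewrite max_l.
by move: IH; rewrite iterS => ->; rewrite maxxx.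
Qed.

Lemma unif_const (n : nat) (M : ctmc R n) (r : R) (g : 'I_n.+1) :
  0 < r -> (forall s, rate M s = r) ->
  unif_rate M = r /\
  unif_mx M g = \matrix_(i, j) if i == g then (j == g)%:R else jump M i j.
Proof.
move=> r0 rE.
have ur : unif_rate M = r.
  by rewrite /unif_rate (eq_bigr (fun=> r)) ?bigmax_const ?ltW.
split => //; apply/matrixP => i j; rewrite !mxE ur rE divff; last by rewrite gt_eqF.
by case: ifP => // _; rewrite subrr mulr0 addr0 mul1r.
Qed.

Definition Emx (k : nat) : 'M[R]_k.+1 :=
  \matrix_(i, j) if i == ord_max then (j == ord_max)%:R
                 else (jump (erlang R k)) i j.

Lemma sum_ind (m : nat) (l0 : 'I_m) (F : 'I_m -> R) :
  \sum_(l < m) (l == l0)%:R * F l = F l0.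
Proof.
rewrite (bigD1 l0) //= eqxx mul1r big1 ?addr0 // => l /negbTE ->; by rewrite mul0r.
Qed.

Lemma Emx_pow (k m : nat) (i : 'I_k.+1) :
  (Emx k ^+ m) i ord_max = ((k <= i + m)%N)%:R.
Proof.
elim: m i => [|m IH] i.
  rewrite expr0 mxE addn0; case: eqP => [->|/eqP h] /=; first by rewrite leqnn.
  rewrite leqNgt; suff -> : (i < k)%N by [].
  by rewrite ltn_neqAle -ltnS ltn_ord andbT; apply: contra h => /eqP hi;
     apply/eqP/val_inj.
rewrite exprS -mulmxE mxE.
under eq_bigr do rewrite mxE.
case: eqP => [->|/eqP h].
  under eq_bigr do rewrite IH.
  rewrite sum_ind /= leq_addr; by rewrite leq_addr.
have ik : (i < k)%N.
  by rewrite ltn_neqAle -ltnS ltn_ord andbT; apply: contra h => /eqP hi;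
     apply/eqP/val_inj.
have ik2 : ((i : nat) == k) = false by rewrite ltn_eqF.
under eq_bigr do rewrite [jump _ _ _]mxE ik2.
have -> : \sum_(l < k.+1) ((l : nat) == i.+1)%:R * (Emx k ^+ m) l ord_max =
          \sum_(l < k.+1) (l == inord i.+1)%:R * (Emx k ^+ m) l ord_max.
  apply: eq_bigr => l _; congr (_%:R * _).
  by rewrite -val_eqE /= inordK.
by rewrite sum_ind IH inordK // addSnnS.
Qed.


Lemma reach_erlang (j : nat) (M : ctmc R j.+1) (r x : R) : 0 < r ->
  (forall s, rate M s = r) -> jump M = jump (erlang R j.+1) ->
  reach_prob M ord_max x = er (r * x) j.
Proof.
move=> r0 rE jE; have [ur um] := unif_const ord_max r0 rE.
rewrite /reach_prob ur um jE -/(Emx j.+1) /er; congr (limn _); apply/funext => N.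
rewrite /series /= big_mkord; apply: eq_bigr => k _.
by rewrite Emx_pow.
Qed.

Lemma absorbing_row (n : nat) (P : 'M[R]_n.+1) (g : 'I_n.+1) :
  (forall i j, 0 <= P i j) -> (forall i, \sum_(j < n.+1) P i j = 1) ->
  P g g = 1 -> forall j, P g j = (j == g)%:R.
Proof.
move=> P0 P1 Pgg j; case: eqP => [->//|/eqP jg].
have h : \sum_(l < n.+1 | l != g) P g l = 0.
  by move: (P1 g); rewrite (bigD1 g) //= Pgg => /(congr1 (fun z => z - 1)); rewrite addrAC subrr add0r.
exact: (psumr_eq0P _ h).
Qed.

Lemma reach_P (n : nat) (M : ctmc R n) (r x : R) : 0 < r ->
  (forall s, rate M s = r) ->
  (forall i j, 0 <= jump M i j) -> (forall i, \sum_(j < n.+1) jump M i j = 1) ->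
  jump M ord_max ord_max = 1 ->
  reach_prob M ord_max x =
    limn (series (fun k => poisson (r * x) k * (jump M ^+ k) ord0 ord_max)).
Proof.
move=> r0 rE P0 P1 Pgg; have [ur um] := unif_const ord_max r0 rE.
rewrite /reach_prob.
have -> : unif_mx M ord_max = jump M.
  rewrite um; apply/matrixP => i j; rewrite mxE.
  by case: eqP => // ->; rewrite (absorbing_row P0 P1 Pgg).
rewrite ur; congr (limn _); apply/funext => N.
by rewrite /series /= big_mkord.
Qed.

Lemma stoch_pow (n : nat) (P : 'M[R]_n.+1) :
  (forall i j, 0 <= P i j) -> (forall i, \sum_(j < n.+1) P i j = 1) ->
  forall k, (forall i j, 0 <= (P ^+ k) i j) /\
            (forall i, \sum_(j < n.+1) (P ^+ k) i j = 1).
Proof.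
move=> P0 P1; elim => [|k [IH0 IH1]].
  split=> [i j|i]; rewrite expr0 ?mxE ?ler0n //.
  by rewrite (bigD1 i) //= mxE eqxx big1 ?addr0 // => j /negbTE; rewrite mxE eq_sym => ->.
split=> [i j|i].
  by rewrite exprSr -mulmxE mxE sumr_ge0 // => l _; rewrite mulr_ge0.
under eq_bigr do rewrite exprSr -mulmxE mxE.
rewrite exchange_big /= -(IH1 i); apply: eq_bigr => l _.
by rewrite -mulr_sumr P1 mulr1.
Qed.

Lemma entry_le_sum (m : nat) (F : 'I_m -> R) (l : 'I_m) :
  (forall i, 0 <= F i) -> F l <= \sum_(i < m) F i.
Proof.
by move=> F0; rewrite (bigD1 l) //= lerDl sumr_ge0.
Qed.

End P2.

Section P3.
Variable R : realType.
Local Notation nc := (@Normc.normc R).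

Lemma cmodE (z : R[i]) : cmod z = nc z.
Proof. by case: z. Qed.

Lemma nc_ge0 (z : R[i]) : 0 <= nc z.
Proof. by case: z => u v /=; rewrite sqrtr_ge0. Qed.

Lemma nc_real (x : R) : nc (to_C x) = `|x|.
Proof. by rewrite /= expr0n /= addr0 sqrtr_sqr. Qed.

Lemma nc_sum (m : nat) (F : 'I_m -> R[i]) (Q : pred 'I_m) :
  nc (\sum_(i < m | Q i) F i) <= \sum_(i < m | Q i) nc (F i).
Proof.
elim/big_ind2 : _ => //; first by rewrite Normc.normc0.
by move=> x1 x2 y1 y2 h1 h2; apply: le_trans (le_normcD _ _) (lerD h1 h2).
Qed.

Lemma ncX (z : R[i]) k : nc (z ^+ k) = nc z ^+ k.
Proof.
elim: k => [|k IH]; first by rewrite !expr0 Normc.normc1.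
by rewrite !exprS Normc.normcM IH.
Qed.

Lemma to_CB (x y : R) : to_C (x - y) = to_C x - to_C y.
Proof. by apply/eqP; rewrite eq_complex /= subr0 !eqxx. Qed.

Lemma map_to_C (m p : nat) (X : 'M[R]_(m, p)) :
  map_mx (@to_C R) X = map_mx (real_complex R) X.
Proof. by apply/matrixP => i j; rewrite !mxE. Qed.

Lemma powC (n : nat) (P : 'M[R]_n.+1) (S : 'M[R[i]]_n.+1) (lam : 'I_n.+1 -> R[i]) k :
  S \in unitmx -> map_mx (@to_C R) P = S *m diag_mx (\row_i lam i) *m invmx S ->
  map_mx (@to_C R) (P ^+ k) = S *m diag_mx (\row_i lam i ^+ k) *m invmx S.
Proof.
move=> Su; rewrite !map_to_C => PE; elim: k => [|k IH].
  rewrite !expr0 map_mx1.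
  have -> : \row_i lam i ^+ 0 = const_mx 1 by apply/matrixP => i j; rewrite !mxE expr0.
  by rewrite diag_const_mx mulmx1 mulmxV.
rewrite exprSr -mulmxE map_mxM IH PE !mulmxA -[_ *m invmx S *m S]mulmxA mulVmx //.
by rewrite mulmx1 -[_ *m diag_mx _ *m diag_mx _]mulmxA mulmx_diag; congr (_ *m diag_mx _ *m _);
   apply/matrixP => i j; rewrite !mxE exprSr.
Qed.

End P3.

Lemma entryC (R : realType) (n : nat) (P : 'M[R]_n.+1) (S : 'M[R[i]]_n.+1)
  (lam : 'I_n.+1 -> R[i]) k :
  S \in unitmx -> map_mx (@to_C R) P = S *m diag_mx (\row_i lam i) *m invmx S ->
  to_C ((P ^+ k) ord0 ord_max) =
    \sum_(i < n.+1) S ord0 i * lam i ^+ k * invmx S i ord_max.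
Proof.
move=> Su PE; have := congr1 (fun X : 'M[R[i]]_n.+1 => X ord0 ord_max) (powC k Su PE).
rewrite mxE => ->; rewrite mxE; apply: eq_bigr => i _.
by rewrite mul_mx_diag !mxE.
Qed.

Lemma bigmax_ge (R : realType) (m : nat) (Q : pred 'I_m) (F : 'I_m -> R) i :
  Q i -> F i <= \big[Num.max/0]_(j < m | Q j) F j.
Proof. by move=> Qi; rewrite (bigD1 i) //= le_max lexx. Qed.

Lemma bigmax_ge0 (R : realType) (m : nat) (Q : pred 'I_m) (F : 'I_m -> R) :
  0 <= \big[Num.max/0]_(j < m | Q j) F j.
Proof. by elim/big_rec : _ => // i x _ hx; rewrite le_max hx orbT. Qed.

Lemma sum_geq (R : realType) (n a : nat) (x : R) :
  \sum_(i < n.+1 | (a <= i)%N) x = x *+ (n.+1 - a).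
Proof.
rewrite -(big_mkord (fun i => (a <= i)%N) (fun=> x)) -sumr_const_nat.
by rewrite (big_nat_widenl a 0).
Qed.

Lemma dbound (R : realType) (n : nat) (P : 'M[R]_n.+1)
  (S : 'M[R[i]]_n.+1) (lam : 'I_n.+1 -> R[i]) (a : nat) j :
  S \in unitmx ->
  map_mx (@to_C R) P = S *m diag_mx (\row_i lam i) *m invmx S ->
  (forall i j : 'I_n.+1, (i <= j)%N -> cmod (lam j) <= cmod (lam i)) ->
  (forall i : 'I_n.+1, (i < a)%N -> lam i = 1) ->
  `|(P ^+ j.+1) ord0 ord_max - (P ^+ j) ord0 ord_max| <=
  (n.+1 - a)%:R * \big[Num.max/0]_(i : 'I_n.+1 | (a <= i)%N)
             cmod (S ord0 i * invmx S i ord_max * (lam i - 1)) *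
    cmod (lam (inord a)) ^+ j.
Proof.
move=> Su PE lamord lam1.
set C := \big[Num.max/0]_(i : 'I_n.+1 | (a <= i)%N) _.
set L := cmod (lam (inord a)).
set w := fun i : 'I_n.+1 => S ord0 i * invmx S i ord_max * (lam i - 1).
rewrite -nc_real to_CB !(entryC _ Su PE) -sumrB.
have -> : \sum_(i < n.+1) (S ord0 i * lam i ^+ j.+1 * invmx S i ord_max -
      S ord0 i * lam i ^+ j * invmx S i ord_max) =
    \sum_(i < n.+1) w i * lam i ^+ j.
  by apply: eq_bigr => i _; rewrite /w exprS; ring.
apply: le_trans (nc_sum _ _) _.
rewrite (bigID (fun i : 'I_n.+1 => (a <= i)%N)) /=.
rewrite [X in _ + X]big1 ?addr0; last first.
  move=> i; rewrite -ltnNge => /lam1 hl; rewrite /w hl.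
  by rewrite !Normc.normcM (_ : Normc.normc (1 - 1 : R[i]) = 0) ?mulr0 ?mul0r // subrr Normc.normc0.
have -> : (n.+1 - a)%:R * C * L ^+ j = \sum_(i < n.+1 | (a <= i)%N) (C * L ^+ j) by rewrite sum_geq mulr_natl -mulrnAl.
apply: ler_sum => i ai.
rewrite Normc.normcM ncX; apply: ler_pM; rewrite ?exprn_ge0 ?nc_ge0 //.
  by rewrite -cmodE; apply: (bigmax_ge (fun i => cmod (w i))).
have an : (a <= n)%N by rewrite (leq_trans ai) // -ltnS ltn_ord.
apply: lerXn2r; rewrite ?nneg_ge0 ?qualifE /= ?nc_ge0 ?cmodE //.
  rewrite /L cmodE; exact: nc_ge0.
rewrite /L -cmodE; apply: lamord; rewrite inordK //.
Qed.

Theorem proposition7 (R : realType) (n : nat) (P : 'M[R]_n.+1)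
  (S : 'M[R[i]]_n.+1) (lam : 'I_n.+1 -> R[i]) (a : nat) (delta t : R) :
  (* P is the (stochastic) transition probability matrix of M *)
  (forall i j, 0 <= P i j) ->
  (forall i, \sum_(j < n.+1) P i j = 1) ->
  (* s_n = g (= ord_max) is absorbing *)
  P ord_max ord_max = 1 ->
  (* standing assumption: all states from which g is unreachable have been
     collapsed into a single absorbing fail state *)
  (forall s s' : 'I_n.+1,
      ~~ connect [rel x y | 0 < P x y] s ord_max ->
      ~~ connect [rel x y | 0 < P x y] s' ord_max -> s = s') ->
  (forall s : 'I_n.+1,
      ~~ connect [rel x y | 0 < P x y] s ord_max -> P s s = 1) ->
  0 < delta -> 0 <= t ->
  (* diagonalisation P = S D S^-1, D = diag(lam_1, ..., lam_n) *)
  S \in unitmx ->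
  map_mx (@to_C R) P = S *m diag_mx (\row_i lam i) *m invmx S ->
  (* eigenvalues in descending order of modulus *)
  (forall i j : 'I_n.+1, (i <= j)%N -> cmod (lam j) <= cmod (lam i)) ->
  (* a = a_P, the multiplicity of eigenvalue 1, and lam_1 = ... = lam_a = 1 *)
  a = #|[pred i : 'I_n.+1 | lam i == 1]| ->
  (forall i : 'I_n.+1, (i < a)%N -> lam i = 1) ->
  let M := Ctmc (fun _ : 'I_n.+1 => 1) P in
  let c := expR delta in
  let M' := scale_ctmc c M in
  let lambda := lam (inord a) in
  let C := \big[Num.max/0]_(i : 'I_n.+1 | (a <= i)%N)
             cmod (S ord0 i * invmx S i ord_max * (lam i - 1)) in
  ((`| reach_prob M' ord_max t - reach_prob M ord_max t |)%:E
    <= ((n.+1 - a)%:R * C)%:E *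
       \sum_(1 <= k <oo) ((cmod lambda) ^+ k.-1 * Diff c t k)%:E)%E.
Proof.
move=> P0 P1 Pgg _ _ d0 t0 Su PE lamord aE lam1.
cbv zeta.
set c := expR delta.
set M := Ctmc _ P.
set M' := scale_ctmc c M.
set lambda := lam (inord a).
pose A k := (P ^+ k) ord0 ord_max.
pose d j := A j.+1 - A j.
have A01 k : 0 <= A k <= 1.
  have [h0 h1] := stoch_pow P0 P1 k.
  by rewrite h0 /= -(h1 ord0); apply: entry_le_sum.
have dge0 j : 0 <= d j.
  have [h0 h1] := stoch_pow P0 P1 j.
  rewrite subr_ge0 /A exprSr -mulmxE mxE.
  apply: le_trans (entry_le_sum ord_max _); first by rewrite Pgg mulr1.
  by move=> l; rewrite mulr_ge0.
have AE k : A k = A 0%N + \sum_(j < k) d j.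
  by rewrite -(big_mkord xpredT d) telescope_sumr // addrC subrK.
have c0 : 0 < c by exact: expR_gt0.
have RM : reach_prob M ord_max t = limn (series (fun k => poisson t k * A k)).
  by rewrite (@reach_P _ _ M 1) ?mul1r //= ltr01.
have RM' : reach_prob M' ord_max t = limn (series (fun k => poisson (c * t) k * A k)).
  by rewrite (@reach_P _ _ M' c) // => s; rewrite /= mulr1.
have ct0 : 0 <= c * t by rewrite mulr_ge0 // ltW.
have [cu1 k1] := key ct0 A01 dge0 AE.
have [cu2 k2] := key t0 A01 dge0 AE.
rewrite RM RM' k1 k2 opprD addrACA subrr add0r -limB //.
have heq : (series (fun j => d j * er (c * t) j) - series (fun j => d j * er t j)) =
    series (fun j => d j * er (c * t) j - d j * er t j).
  by apply/funext => N; rewrite [RHS]/series /= sumrB.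
have cw : cvgn (series (fun j => d j * er (c * t) j - d j * er t j)).
  by rewrite -heq; apply: is_cvgB.
rewrite heq.
apply: le_trans (absbound cw) _.
set L := cmod lambda.
have L0 : 0 <= L by rewrite /L cmodE nc_ge0.
have Dg0 k : 0 <= Diff c t k by rewrite /Diff normr_ge0.
rewrite -(@nneseries_addn _ (fun k => (L ^+ k.-1 * Diff c t k)%:E) 1); last first.
  by move=> k; rewrite lee_fin mulr_ge0 ?exprn_ge0.
rewrite -nneseriesZl; last by move=> k _; rewrite lee_fin mulr_ge0 ?exprn_ge0.
apply: lee_nneseries => [k _ _|j _]; first by rewrite lee_fin normr_ge0.
rewrite -EFinM lee_fin addn1 /=.
have DE : Diff c t j.+1 = `|er (c * t) j - er t j|.
  rewrite /Diff (@reach_erlang _ j (erlang R j.+1) 1) // ?mul1r ?ltr01 //.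
  rewrite (@reach_erlang _ j (scale_ctmc c (erlang R j.+1)) c) //; last by move=> s; rewrite /= mulr1.
  by rewrite distrC.
rewrite -mulrBr normrM ger0_norm // DE mulrA.
apply: ler_wpM2r; first exact: normr_ge0.
have := dbound j Su PE lamord lam1.
by rewrite ger0_norm //; exact: dge0.
Qed.
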